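(* Let $\mathbb{K}$ be a field, $S=\mathbb{K}[x_1,\ldots,x_n]$, and let $I\subseteq S$ be a support-$2$ monomial ideal with underlying simple graph $G(I)$. Suppose there is an edge $\{x_i,x_j\}\in E(G(I))$ such that every minimal vertex cover of $G(I)$ contains exactly one of $x_i,x_j$. If there is some $u\in\mathcal{G}(I)$ with $x_i^{\nu_{i,j}+1}\mid u$ or $x_j^{\nu_{j,i}+1}\mid u$, then $I^{(1)}\neq I$.
   Context: For a monomial ideal $I$, $\mathcal{G}(I)$ denotes its minimal set of monomial generators. $I$ is a support-$2$ monomial ideal if $\mathcal{G}(I)\subseteq\{x_i^ax_j^b : 1\le i<j\le n,\ a,b\ge 1\}$. The underlying simple graph $G(I)$ has vertices $x_1,\ldots,x_n$ and an edge $\{x_i,x_j\}$ whenever some element of $\mathcal{G}(I)$ has support $\{x_i,x_j\}$. For an edge $\{x_i,x_j\}$, $\nu_{i,j}$ denotes the minimum exponent of $x_i$ among the elements of $\mathcal{G}(I)$ whose support is $\{x_i,x_j\}$ (and $\nu_{j,i}$ the minimum exponent of $x_j$ among them). $I^{(1)}=\bigcap_{P\in\mathrm{MinAss}(I)}(IS_P\cap S)$, the intersection of the primary components of $I$ at its minimal primes; $I^{(1)}\neq I$ is equivalent to $I$ having an embedded associated prime. *)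

(* Defs.v *)
From mathcomp Require Import all_boot all_order all_algebra.
From mathcomp Require Import mpoly.
Set Implicit Arguments. Unset Strict Implicit. Unset Printing Implicit Defensive.
Import GRing.Theory.
Local Open Scope ring_scope.

Section Defs.
Variables (K : fieldType) (n : nat).

Definition supp_pair (m : 'X_{1..n}) (i j : 'I_n) : bool :=
  [&& i != j, (0 < m i)%N, (0 < m j)%N &
      [forall k : 'I_n, (k != i) && (k != j) ==> (m k == 0%N)]].

Definition support2 (m : 'X_{1..n}) : Prop := exists i j, supp_pair m i j.

Definition minimal_gens (gens : seq 'X_{1..n}) : Prop :=
  uniq gens /\
  forall g h, g \in gens -> h \in gens -> g != h -> ~ (forall k, (g k <= h k)%N).

Definition mon_ideal (gens : seq 'X_{1..n}) : {mpoly K[n]} -> Prop :=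
  fun f => exists c : seq {mpoly K[n]},
    size c = size gens /\ f = \sum_(k < size gens) c`_k * 'X_[nth 0%MM gens k].

Definition is_ideal (P : {mpoly K[n]} -> Prop) : Prop :=
  [/\ P 0, (forall a b, P a -> P b -> P (a + b)) & (forall r a, P a -> P (r * a))].

Definition is_prime_ideal (P : {mpoly K[n]} -> Prop) : Prop :=
  [/\ is_ideal P, ~ P 1 & forall a b, P (a * b) -> P a \/ P b].

Definition minimal_prime (I P : {mpoly K[n]} -> Prop) : Prop :=
  [/\ is_prime_ideal P, (forall f, I f -> P f) &
      forall Q, is_prime_ideal Q -> (forall f, I f -> Q f) ->
        (forall f, Q f -> P f) -> forall f, P f -> Q f].

(* I^(1) = intersection over minimal primes P of I of (I S_P ∩ S);
   I S_P ∩ S = { f | s f ∈ I for some s ∉ P } *)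
Definition symb1 (I : {mpoly K[n]} -> Prop) : {mpoly K[n]} -> Prop :=
  fun f => forall P, minimal_prime I P -> exists s, ~ P s /\ I (s * f).

Definition edge (gens : seq 'X_{1..n}) (i j : 'I_n) : Prop :=
  exists2 g, g \in gens & supp_pair g i j.

Definition vertex_cover (gens : seq 'X_{1..n}) (C : {set 'I_n}) : Prop :=
  forall i j, edge gens i j -> i \in C \/ j \in C.

Definition minimal_vertex_cover (gens : seq 'X_{1..n}) (C : {set 'I_n}) : Prop :=
  vertex_cover gens C /\ forall D : {set 'I_n}, D \proper C -> ~ vertex_cover gens D.

(* nu_{i,j}: minimum exponent of x_i among generators with support {x_i,x_j}
   (meaningful when {x_i,x_j} is an edge, i.e. the list below is nonempty) *)
Definition nu (gens : seq 'X_{1..n}) (i j : 'I_n) : nat :=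
  let s := map (fun g : 'X_{1..n} => g i) (filter (fun g => supp_pair g i j) gens) in foldr minn (head 0%N s) s.

End Defs.

(* Main.v *)
Require Import Defs.
From mathcomp Require Import all_boot all_order all_algebra.
From mathcomp Require Import mpoly.
From Stdlib Require Import ClassicalEpsilon Classical.
Set Implicit Arguments. Unset Strict Implicit. Unset Printing Implicit Defensive.
Import GRing.Theory.
Local Open Scope ring_scope.

Section Helpers.
Variables (K : fieldType) (n : nat).
Implicit Types (P Q : {mpoly K[n]} -> Prop) (m g : 'X_{1..n}).

Lemma prime_pow P : is_prime_ideal P -> forall a k, P (a ^+ k) -> P a.
Proof.
case=> _ P1 Pm a; elim=> [|k IH]; first by rewrite expr0.
by rewrite exprS => /Pm [//|/IH].
Qed.

Lemma prime_prod P (r : seq 'I_n) (F : 'I_n -> {mpoly K[n]}) :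
  is_prime_ideal P -> P (\prod_(k <- r) F k) -> exists k, k \in r /\ P (F k).
Proof.
move=> [_ P1 Pm]; elim: r => [|a r IH]; first by rewrite big_nil.
rewrite big_cons => /Pm [Ha|/IH [k [kr Hk]]]; first by exists a; rewrite inE eqxx.
by exists k; rewrite inE kr orbT.
Qed.

Lemma prime_monom P m : is_prime_ideal P -> P 'X_[m] ->
  exists k, (0 < m k)%N /\ P 'X_k.
Proof.
move=> Pp; rewrite mpolyXE_id => /(prime_prod Pp) [k [_ Hk]].
exists k; have [e|mk] := posnP (m k); last first.
  by split=> //; apply: (prime_pow Pp Hk).
by move: Hk; rewrite e expr0; case: Pp => _ P1 _.
Qed.

Lemma ideal_monom P m k : is_ideal P -> (0 < m k)%N -> P 'X_k -> P 'X_[m].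
Proof.
case=> _ _ Pm mk Pk.
have le : (U_(k) <= m)%MM by rewrite lep1mP -lt0n.
by rewrite -(submK le) mpolyXD; apply: Pm.
Qed.

Lemma ideal_sum P (I : eqType) (r : seq I) (F : I -> {mpoly K[n]}) :
  is_ideal P -> (forall x, x \in r -> P (F x)) -> P (\sum_(x <- r) F x).
Proof.
case=> P0 PD _; elim: r => [|a r IH] H; first by rewrite big_nil.
rewrite big_cons; apply: PD; first by apply: H; rewrite inE eqxx.
by apply: IH => x xr; apply: H; rewrite inE xr orbT.
Qed.

Lemma mon_ideal_in (gens : seq 'X_{1..n}) g m :
  g \in gens -> (g <= m)%MM -> @mon_ideal K n gens 'X_[m].
Proof.
move=> gin le.
exists (mkseq (fun k => if k == index g gens then 'X_[m - g] else 0) (size gens)).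
split; first by rewrite size_mkseq.
have ix : (index g gens < size gens)%N by rewrite index_mem.
rewrite (bigD1 (Ordinal ix)) //= big1 ?addr0.
  by rewrite nth_mkseq // eqxx nth_index // -mpolyXD submK.
move=> k /eqP nk; rewrite nth_mkseq //; case: eqP => [e|]; last by rewrite mul0r.
by case: nk; apply: val_inj.
Qed.

Lemma mcoeffMX_out (p : {mpoly K[n]}) g m : ~~ (g <= m)%MM -> (p * 'X_[g])@_m = 0.
Proof.
move=> nle; rewrite [p]mpolyE mulr_suml raddf_sum /= big1 // => m' _.
rewrite -scalerAl -mpolyXD mcoeffZ mcoeffX; case: eqP => [e|]; last by rewrite mulr0.
by move: nle; rewrite -e lem_addl.
Qed.

Lemma mon_ideal_out (gens : seq 'X_{1..n}) m :
  @mon_ideal K n gens 'X_[m] -> exists2 g, g \in gens & (g <= m)%MM.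
Proof.
case=> c [sc e]; case: (boolP (has (fun g => g <= m)%MM gens)) => [/hasP //|].
move/hasPn => H; have : ('X_[m] : {mpoly K[n]})@_m = 0.
  rewrite e raddf_sum /= big1 // => k _; apply: mcoeffMX_out.
  by apply: H; apply: mem_nth.
by rewrite mcoeffX eqxx => /eqP; rewrite oner_eq0.
Qed.

Definition hD (D : {set 'I_n}) (k : 'I_n) : {mpoly K[n]} := if k \in D then 0 else 'X_k.
Definition phi (D : {set 'I_n}) := mmap (@mpolyC n K) (hD D).
Definition QD (D : {set 'I_n}) (f : {mpoly K[n]}) : Prop := phi D f = 0.

Lemma phiX_meet (D : {set 'I_n}) m k : k \in D -> (0 < m k)%N -> phi D 'X_[m] = 0.
Proof.
move=> kD mk; rewrite /phi mmapX /mmap1 (bigD1 k) //= /hD kD expr0n.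
by rewrite eqn0Ngt mk mul0r.
Qed.

Lemma phiX_avoid (D : {set 'I_n}) m : (forall k, (0 < m k)%N -> k \notin D) -> phi D 'X_[m] = 'X_[m].
Proof.
move=> H; rewrite /phi mmapX /mmap1 mpolyXE_id; apply: eq_bigr => k _.
rewrite /hD; have [->|/H /negbTE -> //] := posnP (m k); by rewrite !expr0.
Qed.

Lemma phiD (D : {set 'I_n}) a b : phi D (a + b) = phi D a + phi D b.
Proof. exact: mmapD. Qed.
Lemma phiM (D : {set 'I_n}) a b : phi D (a * b) = phi D a * phi D b.
Proof. exact: rmorphM. Qed.
Lemma phi1 (D : {set 'I_n}) : phi D 1 = 1.
Proof. exact: rmorph1. Qed.
Lemma phi0 (D : {set 'I_n}) : phi D 0 = 0.
Proof. exact: mmap0. Qed.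
Lemma phiB (D : {set 'I_n}) a b : phi D (a - b) = phi D a - phi D b.
Proof. exact: mmapB. Qed.
Lemma phi_sum (D : {set 'I_n}) (I : Type) (r : seq I) (F : I -> {mpoly K[n]}) :
  phi D (\sum_(x <- r) F x) = \sum_(x <- r) phi D (F x).
Proof. exact: raddf_sum. Qed.
Lemma phiC (D : {set 'I_n}) c : phi D c%:MP = c%:MP.
Proof. exact: mmapC. Qed.

Lemma QD_prime (D : {set 'I_n}) : is_prime_ideal (QD D).
Proof.
rewrite /QD; split; first split.
- exact: phi0.
- by move=> a b Ha Hb; rewrite phiD Ha Hb addr0.
- by move=> r a Ha; rewrite phiM Ha mulr0.
- by rewrite phi1; apply/eqP; rewrite oner_eq0.
- by move=> a b; rewrite phiM => /eqP; rewrite mulf_eq0 => /orP [] /eqP; [left|right].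
Qed.

Lemma QD_X (D : {set 'I_n}) k : QD D 'X_k -> k \in D.
Proof.
rewrite /QD => H; apply/negPn/negP => kD; move: H; rewrite phiX_avoid.
  by move=> /(congr1 (mcoeff U_(k))); rewrite mcoeffX eqxx mcoeff0 => /eqP; rewrite oner_eq0.
by move=> j; rewrite mnm1E; case: eqP => // <-.
Qed.

Lemma QD_sub (D : {set 'I_n}) P : is_ideal P -> (forall k, k \in D -> P 'X_k) ->
  forall f, QD D f -> P f.
Proof.
move=> Pi HD f; rewrite /QD => e.
have -> : f = f - phi D f by rewrite e subr0.
rewrite {1 2}[f]mpolyE phi_sum -sumrB; apply: ideal_sum => // m _.
rewrite -mul_mpolyC phiM phiC -mulrBr.
case: (boolP [exists k, (k \in D) && (0 < m k)%N]).
  case/existsP=> k /andP [kD mk]; rewrite (phiX_meet kD mk) subr0.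
  by have [_ _ Pm] := Pi; apply: Pm; apply: (ideal_monom Pi mk); apply: HD.
move=> H; rewrite phiX_avoid ?subrr ?mulr0; first by case: Pi.
move=> k mk; apply/negP => kD; move/existsP: H; apply; exists k.
by rewrite kD mk.
Qed.

End Helpers.

Definition pb (A : Prop) : bool := if excluded_middle_informative A then true else false.
Lemma pbP (A : Prop) : reflect A (pb A).
Proof. by rewrite /pb; case: excluded_middle_informative => H; constructor. Qed.

Section Graph.
Variables (K : fieldType) (n : nat) (gens : seq 'X_{1..n}).
Implicit Types (P Q : {mpoly K[n]} -> Prop) (m g : 'X_{1..n}).

Lemma supp_pairC g a b : supp_pair g a b = supp_pair g b a.
Proof.
rewrite /supp_pair eq_sym; case: (b != a) => //=.
case: (0 < g a)%N; case: (0 < g b)%N => //=.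
by apply: eq_forallb => k; rewrite andbC.
Qed.

Lemma supp_pair_out g a b k : supp_pair g a b -> k != a -> k != b -> g k = 0%N.
Proof.
case/and4P=> _ _ _ /forallP /(_ k) H ka kb; move: H; rewrite ka kb /=.
by move/eqP.
Qed.

Lemma supp_pair_pos g a b : supp_pair g a b -> (0 < g a)%N /\ (0 < g b)%N.
Proof. by case/and4P. Qed.

Lemma foldr_minn_mem (x : nat) s : foldr minn x s \in x :: s.
Proof.
elim: s => [|a s IH] /=; first by rewrite inE.
rewrite /minn; case: ltnP => _; first by rewrite !inE eqxx orbT.
move: IH; rewrite !inE => /orP [->|->] //; by rewrite !orbT.
Qed.

Lemma nu_attained i j : edge gens i j ->
  exists2 g0, g0 \in gens & supp_pair g0 i j /\ g0 i = nu gens i j.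
Proof.
case=> g gin gp.
pose s := map (fun g : 'X_{1..n} => g i) (filter (fun g => supp_pair g i j) gens).
have : nu gens i j \in s.
  rewrite /nu -/s; have : g i \in s by apply: map_f; rewrite mem_filter gp gin.
  case: s => [//|a s'] _ /=; move: (foldr_minn_mem a (a :: s')); rewrite /= !inE.
  by case/or3P => ->; rewrite ?orbT.
rewrite /s => /mapP [g0]; rewrite mem_filter => /andP [p0 g0in] e.
by exists g0.
Qed.

Lemma gens_meet D : (forall g, g \in gens -> support2 g) -> vertex_cover gens D ->
  forall g, g \in gens -> exists k, k \in D /\ (0 < g k)%N.
Proof.
move=> S2 VC g gin; case: (S2 g gin) => a [b p].
have [pa pb'] := supp_pair_pos p.
by case: (VC a b (ex_intro2 _ _ g gin p)) => H; [exists a | exists b].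
Qed.

Lemma I_sub_QD D : (forall g, g \in gens -> support2 g) -> vertex_cover gens D ->
  forall f, @mon_ideal K n gens f -> QD D f.
Proof.
move=> S2 VC f [c [sc ->]]; rewrite /QD.
rewrite phi_sum big1 // => k _; rewrite phiM.
have [l [lD lp]] := gens_meet S2 VC (mem_nth 0%MM (ltn_ord k)).
by rewrite (phiX_meet K lD lp) mulr0.
Qed.

Lemma exists_min_cover C : vertex_cover gens C ->
  exists D : {set 'I_n}, D \subset C /\ minimal_vertex_cover gens D.
Proof.
move: {2}#|C| (leqnn #|C|) => N; elim: N C => [|N IH] C cN VC.
  exists C; split => //; split => // D /proper_card; rewrite ltnNge.
  by move: cN; rewrite leqn0 => /eqP ->.
case: (classic (minimal_vertex_cover gens C)) => [H|H]; first by exists C.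
have [D [DC VD]] : exists D : {set 'I_n}, D \proper C /\ vertex_cover gens D.
  apply: NNPP => H2; apply: H; split => // D DC VD; apply: H2; by exists D.
have := IH D; case.
- by rewrite -ltnS; apply: leq_trans (proper_card DC) cN.
- exact: VD.
move=> E [ED ME]; exists E; split => //.
by apply: subset_trans ED (proper_sub DC).
Qed.

Lemma prime_cover P : is_prime_ideal P -> (forall f, @mon_ideal K n gens f -> P f) ->
  vertex_cover gens [set k | pb (P 'X_k)].
Proof.
move=> Pp IP a b [g gin gp].
have := prime_monom Pp (IP _ (mon_ideal_in K gin (lepm_refl g))).
case=> k [gk Pk]; rewrite !inE.
case: (eqVneq k a) => [<-|ka]; first by left; apply/pbP.
case: (eqVneq k b) => [<-|kb]; first by right; apply/pbP.
by move: gk; rewrite (supp_pair_out gp ka kb).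
Qed.

End Graph.

Lemma main_case (K : fieldType) (n : nat) (gens : seq 'X_{1..n}) (i j : 'I_n) u :
  minimal_gens gens -> (forall g, g \in gens -> support2 g) -> edge gens i j ->
  (forall C : {set 'I_n}, minimal_vertex_cover gens C -> (i \in C) (+) (j \in C)) ->
  u \in gens -> ((nu gens i j).+1 <= u i)%N ->
  symb1 (@mon_ideal K n gens) <> @mon_ideal K n gens.
Proof.
move=> [_ MG] S2 E X uin lt.
have [g0 g0in [p0 g0i]] := nu_attained E.
have ij : i != j by case/and4P: p0.
move: lt g0i; set v := nu gens i j => lt g0i.
pose w : 'X_{1..n} := [multinom (if k == i then v else u k) | k < n].
have wE : forall k, w k = if k == i then v else u k by move=> k; rewrite mnmE.
have uE : u = (w + U_(i) *+ (u i - v))%MM.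
  apply/mnmP => k; rewrite mnmDE mulmnE mnm1E wE; case: (eqVneq k i) => [->|ki].
  - by rewrite mul1n subnKC // ltnW.
  - by rewrite mul0n addn0.
have notI : ~ @mon_ideal K n gens 'X_[w].
  move/mon_ideal_out => [g gin /mnm_lepP le].
  apply: (MG g u gin uin).
  - apply/eqP => e; have := le i; rewrite wE eqxx e => H.
    by move: (leq_trans lt H); rewrite ltnn.
  - move=> k; apply: leq_trans (le k) _; rewrite wE; case: eqP => [->|//].
    exact: ltnW.
move=> Eq; apply: notI; rewrite -Eq => P [Pp IP Pmin].
have [Pid _ _] := Pp.
have pow_notin : forall l d, ~ P 'X_l -> ~ P 'X_[U_(l) *+ d].
  move=> l d nl /(prime_monom Pp) [k [kp Pk]]; move: kp.
  rewrite mulmnE mnm1E; case: eqP => [e|]; last by rewrite mul0n.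
  by move: Pk; rewrite -e.
case: (classic (P 'X_i)) => Pi.
- have nPj : ~ P 'X_j.
    move=> Pj.
    have [D [DC MD]] := exists_min_cover (prime_cover Pp IP).
    have QP : forall f, QD D f -> P f.
      apply: QD_sub => // k kD; move: (subsetP DC k kD); rewrite inE.
      by move/pbP.
    have PQ := Pmin (QD D) (QD_prime K D) (I_sub_QD S2 MD.1) QP.
    by have := X D MD; rewrite (QD_X (PQ _ Pi)) (QD_X (PQ _ Pj)).
  exists 'X_[U_(j) *+ g0 j]; split; first exact: pow_notin.
  rewrite -mpolyXD; apply: (mon_ideal_in K g0in); apply/mnm_lepP => k.
  rewrite mnmDE mulmnE mnm1E wE.
  case: (eqVneq k i) => [->|ki]; first by rewrite g0i leq_addl.
  case: (eqVneq k j) => [->|kj]; first by rewrite ?eqxx mul1n leq_addr.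
  by rewrite (supp_pair_out p0 ki kj).
- exists 'X_[U_(i) *+ (u i - v)]; split; first exact: pow_notin.
  rewrite -mpolyXD addmC -uE; exact: (mon_ideal_in K uin (lepm_refl u)).
Qed.

Theorem proposition3p1 (K : fieldType) (n : nat) (gens : seq 'X_{1..n}) :
  minimal_gens gens ->
  (forall g, g \in gens -> support2 g) ->
  forall i j : 'I_n,
    edge gens i j ->
    (forall C : {set 'I_n}, minimal_vertex_cover gens C ->
        (i \in C) (+) (j \in C)) ->
    (exists2 u, u \in gens & ((nu gens i j).+1 <= u i)%N \/ ((nu gens j i).+1 <= u j)%N) ->
    symb1 (@mon_ideal K n gens) <> @mon_ideal K n gens.
Proof.
move=> MG S2 i j E X [u uin [H|H]]; first exact: (main_case MG S2 E X uin H).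
apply: (main_case (i := j) (j := i) MG S2 _ _ uin H).
- by case: E => g gin gp; exists g => //; rewrite supp_pairC.
- by move=> C MC; rewrite addbC; apply: X.
Qed.
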